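(* Let $X$ be a real Banach space, let $1<r\le p<\infty$, and let $n$ be the largest integer strictly less than $r$. Let $f:X\to\mathbb{R}$ be $p$-homogeneous, $C^n$ on $X\setminus\{0\}$, with $f^{(n)}$ $(r-n)$-Hölder on the unit sphere of $X$. Then $f$ is $C^n$ on all of $X$, $f^{(j)}(0)=0$ for $j=1,\dots,n$, and there are constants $C_1,\dots,C_n>0$ such that for all $x,y\in X$: (1) $\|f^{(n)}(x)-f^{(n)}(y)\|\le C_n(\max\{\|x\|,\|y\|\})^{p-r}\|x-y\|^{r-n}$; (2) $\|f^{(j)}(x)-f^{(j)}(y)\|\le C_j(\max\{\|x\|,\|y\|\})^{p-(j+1)}\|x-y\|$ for $j=1,\dots,n-1$.
   Context: A function $f$ is $p$-homogeneous if $f(\lambda x)=|\lambda|^pf(x)$ for all $x\in X$, $\lambda\in\mathbb{R}$. Derivatives are Fréchet derivatives, with the operator norm on multilinear maps. *)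

(* Defs.v *)
From HB Require Import structures.
From mathcomp Require Import all_boot all_order all_algebra.
From mathcomp Require Import all_classical all_reals all_analysis.
Set Implicit Arguments. Unset Strict Implicit. Unset Printing Implicit Defensive.
Import Order.TTheory GRing.Theory Num.Theory.
Import numFieldNormedType.Exports.
Local Open Scope classical_set_scope.
Local Open Scope ring_scope.

(* A j-linear form on X is represented as a function of j-tuples of vectors
   ('I_j -> X) -> R. *)

Definition upd (X : Type) (j : nat) (v : 'I_j -> X) (i : 'I_j) (y : X) : 'I_j -> X :=
  fun k => if k == i then y else v k.

Definition cons_vec (X : Type) (j : nat) (h : X) (v : 'I_j -> X) : 'I_j.+1 -> X :=
  fun k => match unlift ord0 k with Some k' => v k' | None => h end.

Definition multilinear (R : realType) (X : normedModType R) (j : nat)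
  (M : ('I_j -> X) -> R) : Prop :=
  forall (v : 'I_j -> X) (i : 'I_j) (a : R) (u w : X),
    M (upd v i (a *: u + w)) = a * M (upd v i u) + M (upd v i w).

Definition bounded_multilinear (R : realType) (X : normedModType R) (j : nat)
  (M : ('I_j -> X) -> R) : Prop :=
  multilinear M /\
  exists C : R, forall v : 'I_j -> X, `|M v| <= C * \prod_(i < j) `|v i|.

Definition opnorm (R : realType) (X : normedModType R) (j : nat)
  (M : ('I_j -> X) -> R) : R :=
  sup [set `|M v| | v in [set v : 'I_j -> X | forall i, `|v i| <= 1]].

(* D is a tower of derivatives of f up to order n on the open set U:
   D 0 = f, each D j x (j <= n, x in U) is a bounded j-linear form,
   D (j+1) x is the Frechet derivative at x of y |-> D j y (an element of
   L(X, L^j(X)) identified with L^(j+1)(X), the new direction being the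
   first argument), and D n is continuous on U for the operator norm. *)
Definition Cn_tower (R : realType) (X : normedModType R) (U : set X)
  (f : X -> R) (n : nat) (D : forall j : nat, X -> ('I_j -> X) -> R) : Prop :=
  [/\ forall x, U x -> forall v, D 0%N x v = f x,
      forall j x, (j <= n)%N -> U x -> bounded_multilinear (D j x),
      forall j x, (j < n)%N -> U x ->
        forall eps : R, 0 < eps -> exists2 delta : R, 0 < delta &
          forall h : X, `|h| < delta ->
            opnorm (fun v => D j (x + h) v - D j x v - D j.+1 x (cons_vec h v))
              <= eps * `|h| &
      forall x, U x -> forall eps : R, 0 < eps -> exists2 delta : R, 0 < delta &
          forall y, U y -> `|y - x| < delta ->
            opnorm (fun v => D n y v - D n x v) <= eps].

Definition Cn_on (R : realType) (X : normedModType R) (U : set X)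
  (f : X -> R) (n : nat) : Prop := exists D, Cn_tower U f n D.

Definition p_homogeneous (R : realType) (X : normedModType R) (p : R)
  (f : X -> R) : Prop :=
  forall (x : X) (l : R), f (l *: x) = (`|l| `^ p) * f x.

(* Main.v *)
Require Import Defs.
From HB Require Import structures.
From mathcomp Require Import all_boot all_order all_algebra.
From mathcomp Require Import all_classical all_reals all_analysis.
From mathcomp Require Import ring lra zify.
Import Order.TTheory GRing.Theory Num.Theory.
Import numFieldNormedType.Exports.
Local Open Scope classical_set_scope.
Local Open Scope ring_scope.
Set Implicit Arguments. Unset Strict Implicit. Unset Printing Implicit Defensive.

Section H.
Context {R : realType} {X : normedModType R}.

Definition ball1 (j : nat) (v : 'I_j -> X) := forall i, `|v i| <= 1.

Lemma ball1_0 j : ball1 (fun _ : 'I_j => (0:X)).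
Proof. by move=> i; rewrite normr0. Qed.

Lemma opnorm_le j (M : ('I_j -> X) -> R) C :
  (forall v, ball1 v -> `|M v| <= C) -> opnorm M <= C.
Proof.
move=> H; apply: ge_sup.
  by exists `|M (fun _ => 0)|, (fun _ => 0) => //; exact: (@ball1_0 j).
by move=> _ [v Hv <-]; apply: H.
Qed.

Lemma opnorm_ge j (M : ('I_j -> X) -> R) C v :
  (forall v, ball1 v -> `|M v| <= C) -> ball1 v -> `|M v| <= opnorm M.
Proof.
move=> H hv; apply: sup_upper_bound; last by exists v.
split; first by exists `|M v|, v.
by exists C => _ [w hw <-]; apply: H.
Qed.

Lemma opnorm_ge0 j (M : ('I_j -> X) -> R) C :
  (forall v, ball1 v -> `|M v| <= C) -> 0 <= opnorm M.
Proof.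
move=> H; exact: le_trans (normr_ge0 _) (opnorm_ge H (@ball1_0 j)).
Qed.

Lemma ml_upd0 j (M : ('I_j -> X) -> R) v i : multilinear M -> M (upd v i 0) = 0.
Proof.
move=> H; have := H v i 1 0 0; rewrite scaler0 addr0 mul1r => E.
lra.
Qed.

Lemma ml_updZ j (M : ('I_j -> X) -> R) v i a u : multilinear M ->
  M (upd v i (a *: u)) = a * M (upd v i u).
Proof. by move=> H; have := H v i a u 0; rewrite addr0 ml_upd0 // addr0. Qed.

Lemma cons0 j (h : X) (v : 'I_j -> X) : cons_vec h v ord0 = h.
Proof. by rewrite /cons_vec unlift_none. Qed.

Lemma consS j (h : X) (v : 'I_j -> X) k : cons_vec h v (lift ord0 k) = v k.
Proof. by rewrite /cons_vec liftK. Qed.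

Lemma cons_upd j (h h' : X) (v : 'I_j -> X) :
  cons_vec h' v = upd (cons_vec h v) ord0 h'.
Proof.
apply/funext => k; rewrite /upd; case: (unliftP ord0 k) => [k'|] ->.
  by rewrite eq_sym (negbTE (neq_lift _ _)) /cons_vec liftK.
by rewrite eqxx /cons_vec unlift_none.
Qed.

Lemma cons_decomp j (u : 'I_j.+1 -> X) :
  u = cons_vec (u ord0) (fun k => u (lift ord0 k)).
Proof.
by apply/funext => k; case: (unliftP ord0 k) => [k'|] ->; rewrite ?consS ?cons0.
Qed.

Lemma ball1_cons j (h : X) (v : 'I_j -> X) : `|h| <= 1 -> ball1 v ->
  ball1 (cons_vec h v).
Proof.
by move=> hh hv k; case: (unliftP ord0 k) => [k'|] ->; rewrite ?consS ?cons0.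
Qed.

Lemma ball1_tail j (u : 'I_j.+1 -> X) : ball1 u -> ball1 (fun k => u (lift ord0 k)).
Proof. by move=> hu k; apply: hu. Qed.

Lemma prod_ball1 j (v : 'I_j -> X) : ball1 v ->
  0 <= \prod_(i < j) `|v i| <= 1.
Proof.
move=> hv; apply/andP; split; first by apply: prodr_ge0 => i _.
by apply: prodr_ile1 => i _; rewrite normr_ge0 hv.
Qed.

Lemma bm_bnd j (M : ('I_j -> X) -> R) : bounded_multilinear M ->
  exists C, forall v, ball1 v -> `|M v| <= C.
Proof.
move=> [_ [C HC]]; exists `|C| => v hv.
apply: le_trans (HC v) _.
have /andP[p0 p1] := prod_ball1 hv.
apply: le_trans (_ : `|C| * \prod_(i < j) `|v i| <= _).
  by apply: ler_wpM2r => //; exact: ler_norm.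
by rewrite -[leRHS]mulr1; apply: ler_wpM2l.
Qed.

Lemma cons_lin j (M : ('I_j.+1 -> X) -> R) a (h : X) v : multilinear M ->
  M (cons_vec (a *: h) v) = a * M (cons_vec h v).
Proof.
by move=> H; rewrite (cons_upd h (a *: h)) (ml_updZ (M:=M)) // -cons_upd.
Qed.

Lemma cons_bound j (M : ('I_j.+1 -> X) -> R) (B : R) (w : X) v : multilinear M ->
  (forall u, ball1 u -> `|M u| <= B) -> ball1 v -> `|M (cons_vec w v)| <= B * `|w|.
Proof.
move=> H HB hv; have [->|w0] := eqVneq w 0.
  have -> : cons_vec (0:X) v = cons_vec (0 *: (0:X)) v by rewrite scale0r.
  by rewrite cons_lin // mul0r normr0 normr0 mulr0.
have nw : 0 < `|w| by rewrite normr_gt0.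
have -> : cons_vec w v = cons_vec (`|w| *: (`|w|^-1 *: w)) v.
  by rewrite scalerA mulfV ?gt_eqF // scale1r.
rewrite (cons_lin (M:=M)) // normrM normr_id mulrC.
rewrite ler_wpM2r ?normr_ge0 // HB //; apply: ball1_cons => //.
by rewrite normrZ normfV normr_id mulVf ?gt_eqF.
Qed.

Lemma bm_cons_bnd j (M : ('I_j.+1 -> X) -> R) (h : X) : bounded_multilinear M ->
  exists C, forall v, ball1 v -> `|M (cons_vec h v)| <= C.
Proof.
move=> bM; have [C HC] := bm_bnd bM; exists (C * `|h|) => v hv.
exact: cons_bound bM.1 HC hv.
Qed.

End H.
Section H2.
Context {R : realType}.
Lemma is_derive_eps (g : R -> R) a L :
  (forall e, 0 < e -> exists2 d, 0 < d & forall h, `|h| < d ->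
     `|g (a + h) - g a - h * L| <= e * `|h|) ->
  is_derive a 1 g L.
Proof.
move=> H.
have cv : (fun h => h^-1 *: ((g \o shift a) (h *: 1) - g a)) @ 0^' --> L.
  apply/cvgrPdist_le => e ep; have [d dp Hd] := H e ep.
  apply/nbhs_ballP; exists d => //= h; rewrite /ball /= sub0r normrN => hd hne0.
  have hn : 0 < `|h| by rewrite normr_gt0.
  have := Hd h hd.
  rewrite /shift /=.
  have E1 : forall x y : R, x *: y = x * y by [].
  rewrite !E1 mulr1 [h + a]addrC.
  have -> : L - h^-1 * (g (a + h) - g a) = - h^-1 * (g (a + h) - g a - h * L).
    by field.
  rewrite normrM normrN normfV => E.
  by rewrite mulrC ler_pdivrMr.
split; first exact: cvgP cv.

exact: cvg_lim cv.
Qed.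
End H2.

Section H3.
Context {R : realType} {X : normedModType R}.

Lemma FR (U : set X) f n (D : forall j : nat, X -> ('I_j -> X) -> R) j x (eps : R) :
  Cn_tower U f n D -> (j < n)%N -> U x ->
  (exists2 d0 : R, 0 < d0 & forall h : X, `|h| < d0 -> U (x + h)) ->
  0 < eps -> exists2 d : R, 0 < d & forall h : X, `|h| < d -> forall v, ball1 v ->
   `|D j (x + h) v - D j x v - D j.+1 x (cons_vec h v)| <= eps * `|h|.
Proof.
move=> [_ bm fr _] jn Ux [d0 d0p hd0] ep.
have [d dp Hd] := fr j x jn Ux eps ep.
exists (Num.min d d0); first by rewrite lt_min dp d0p.
move=> h; rewrite lt_min => /andP[hd hd0'] v hv.
apply: le_trans (Hd h hd).
have [C1 H1] := bm_bnd (bm j (x+h) (ltnW jn) (hd0 h hd0')).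
have [C2 H2] := bm_bnd (bm j x (ltnW jn) Ux).
have [C3 H3] := bm_cons_bnd h (bm j.+1 x jn Ux).
apply: (opnorm_ge (C := C1 + C2 + C3)) => // w hw.
apply: le_trans (ler_normB _ _) _; rewrite lerD ?H3 //.
by apply: le_trans (ler_normB _ _) _; rewrite lerD ?H1 ?H2.
Qed.

Lemma MV (U : set X) f n (D : forall j : nat, X -> ('I_j -> X) -> R) j (a w : X) v (B : R) :
  Cn_tower U f n D -> (j < n)%N -> ball1 v ->
  (forall z, U z -> exists2 d0 : R, 0 < d0 & forall h : X, `|h| < d0 -> U (z + h)) ->
  (forall s : R, 0 <= s <= 1 -> U (a + s *: w)) ->
  (forall s : R, 0 <= s <= 1 -> `|D j.+1 (a + s *: w) (cons_vec w v)| <= B) ->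
  `|D j (a + w) v - D j a v| <= B.
Proof.
move=> tw jn hv hop hU hB.
pose phi := fun s : R => D j (a + s *: w) v.
pose df := fun s : R => D j.+1 (a + s *: w) (cons_vec w v).
have der : forall s : R, 0 <= s <= 1 -> is_derive s 1 phi (df s).
  move=> s hs; apply: is_derive_eps => e ep.
  have wp : 0 < `|w| + 1 by rewrite ltr_wpDl.
  have [d dp Hd] := FR tw jn (hU s hs) (hop _ (hU s hs)) (divr_gt0 ep wp).
  exists (d / (`|w| + 1)) => [|h hh]; first by rewrite divr_gt0.
  have hw : `|h *: w| < d.
    rewrite normrZ; apply: le_lt_trans (_ : `|h| * (`|w| + 1) < d).
      by rewrite ler_wpM2l // lerDl.
    by rewrite -ltr_pdivlMr.
  have := Hd (h *: w) hw v hv.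
  have bm : bounded_multilinear (D j.+1 (a + s *: w)).
    by case: tw => _ bmT _ _; apply: bmT; [exact: jn | exact: hU].
  rewrite (cons_lin (M := D j.+1 (a + s *: w))); last exact: bm.1.
  rewrite /phi /df.
  have -> : a + (s + h) *: w = a + s *: w + h *: w by rewrite scalerDl addrA.
  move=> E; apply: le_trans E _.
  rewrite normrZ.
  rewrite [leLHS](_ : _ = (e * `|h|) * (`|w| / (`|w| + 1))); last by ring.
  apply: ler_piMr; first exact: mulr_ge0 (ltW ep) (normr_ge0 h).
  by rewrite ler_pdivrMr // mul1r lerDl.
have der' : forall x : R, x \in `]0, 1[%R -> is_derive x 1 phi (df x).
  move=> x; rewrite in_itv /= => /andP[h1 h2]; apply: der.
  by rewrite !ltW.
have cont : {within `[0, 1], continuous phi}.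
  apply: continuous_in_subspaceT => x xin.
  have dx : is_derive x 1 phi (df x).
    by apply: der; move: xin; rewrite in_setE /= in_itv.
  apply: differentiable_continuous; apply/derivable1_diffP.
  exact: ex_derive.
have [c cin E] := @MVT_segment R phi df 0 1 ler01 der' cont.
move: E; rewrite /phi scale1r scale0r addr0 subr0 mulr1 => ->.
apply: hB; move: cin; by rewrite in_itv.
Qed.
End H3.

Section Misc.
Context {R : realType}.
Lemma eq_of_small (c K : R) : 0 <= K -> (forall e, 0 < e -> `|c| <= e * K) -> c = 0.
Proof.
move=> K0 H; apply/eqP; apply: contraT => c0.
have cp : 0 < `|c| by rewrite normr_gt0.
have K1 : 0 < K + 1 by rewrite ltr_wpDl.
have := H (`|c| / (K + 1)) (divr_gt0 cp K1).
rewrite mulrAC ler_pdivlMr // mulrDr mulr1 => E.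
have : `|c| <= 0 by lra.
by rewrite leNgt cp.
Qed.

Lemma one_sub_exp (s : R) k : 0 <= s <= 1 -> 1 - s ^+ k <= k%:R * (1 - s).
Proof.
move=> /andP[s0 s1]; elim: k => [|k IH]; first by rewrite expr0 subrr mul0r.
rewrite exprS -natr1 mulrDl mul1r.
have e0 : 0 <= s ^+ k by apply: exprn_ge0.
have e1 : s ^+ k <= 1 by apply: exprn_ile1.
have h1 : s ^+ k * (1 - s) <= 1 - s by apply: ler_piMl => //; lra.
nra.
Qed.

Lemma tau_le (t b : R) : 0 <= t <= 1 -> 0 < b <= 1 -> t <= t `^ b.
Proof.
move=> /andP[t0 t1] /andP[b0 b1]; have [->|tn0] := eqVneq t 0.
  by rewrite powR_ge0.
by apply: ger1_powR => //; rewrite t1 lt0r tn0 t0.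
Qed.

Lemma small (M q e : R) : 0 <= M -> 0 < q -> 0 < e ->
  exists2 d : R, 0 < d & forall t : R, 0 <= t -> t < d -> M * t `^ q <= e.
Proof.
move=> M0 q0 e0; have M1 : 0 < M + 1 by rewrite ltr_wpDl.
have c0 : 0 < e / (M + 1) by rewrite divr_gt0.
exists ((e / (M + 1)) `^ q^-1); first by rewrite powR_gt0.
move=> t t0 td.
have : t `^ q <= ((e / (M + 1)) `^ q^-1) `^ q.
  apply: ge0_ler_powR; [exact: ltW | by rewrite nnegrE | by rewrite nnegrE powR_ge0 | exact: ltW].
rewrite -powRrM mulVf ?gt_eqF // (powRr1 (ltW c0)) => H.
apply: le_trans (_ : M * (e / (M + 1)) <= e).
  exact: ler_wpM2l.
rewrite mulrA ler_pdivrMr //; lra.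
Qed.

End Misc.

Unset Implicit Arguments.
Section Main.
Context {R : realType} {X : normedModType R}.
Context (p : R) (n : nat) (f : X -> R) (D : forall j : nat, X -> ('I_j -> X) -> R).
Context (np : n%:R < p) (hom : p_homogeneous p f)
  (tw : Cn_tower [set x : X | x != 0] f n D).

Lemma open0 (z : X) : z != 0 ->
  exists2 d0 : R, 0 < d0 & forall h : X, `|h| < d0 -> [set x : X | x != 0] (z + h).
Proof.
move=> z0; exists `|z|; first by rewrite normr_gt0.
move=> h hz /=; apply/eqP => E; move: hz.
have -> : h = - z by apply/eqP; rewrite -addr_eq0 addrC E.
by rewrite normrN ltxx.
Qed.


Lemma twbm (j : nat) (x : X) : (j <= n)%N -> x != 0 -> bounded_multilinear (D j x).
Proof. by case: tw => _ H _ _; apply: H. Qed.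

Lemma HOM j : (j <= n)%N -> forall (x : X) (t : R) v, x != 0 -> 0 < t -> ball1 v ->
  D j (t *: x) v = t `^ (p - j%:R) * D j x v.
Proof.
elim: j => [|j IH] jn x t v x0 t0 hv.
  have tx0 : t *: x != 0 by rewrite scaler_eq0 negb_or gt_eqF.
  case: tw => H0 _ _ _.
  by rewrite !H0 // hom subr0 gtr0_norm.
have jn' : (j <= n)%N by apply: ltnW.
have tx0 : t *: x != 0 by rewrite scaler_eq0 negb_or gt_eqF.
rewrite (cons_decomp v); set h := v ord0; set w := fun k => v (lift ord0 k).
have hw : ball1 w by apply: ball1_tail.
set A := D j.+1 (t *: x) (cons_vec h w).
set B := D j.+1 x (cons_vec h w).
set T := t `^ (p - j%:R).
have T0 : 0 <= T by apply: powR_ge0.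
suff E : t * A - T * B = 0.
  have tne : t != 0 by rewrite gt_eqF.
  have -> : p - j.+1%:R = (p - j%:R) - 1 by rewrite -natr1 opprD addrA.
  rewrite powRB ?tne ?implybT // powRr1 ?ltW //.
  apply: (mulfI tne); rewrite mulrA mulrCA mulfV // mulr1.
  by apply/eqP; rewrite -subr_eq0; apply/eqP.
apply: (eq_of_small (K := `|h| * (t + T))).
  by rewrite mulr_ge0 // addr_ge0 // ltW.
move=> e ep.
have [d1 d1p H1] := FR tw jn tx0 (open0 _ tx0) ep.
have [d2 d2p H2] := FR tw jn x0 (open0 _ x0) ep.
have xp : 0 < `|x| by rewrite normr_gt0.
pose m := Num.min d1 (Num.min d2 `|x|).
have mp : 0 < m by rewrite !lt_min d1p d2p xp.
have Lp : 0 < 2 * (t * `|h| + `|h| + 1).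
  by rewrite mulr_gt0 // ltr_wpDl // addr_ge0 // mulr_ge0 // ltW.
pose s := m / (2 * (t * `|h| + `|h| + 1)).
have sp : 0 < s by rewrite divr_gt0.
have sh : s * `|h| < m.
  rewrite /s mulrAC ltr_pdivrMr // ltr_pM2l //.
  have : 0 <= t * `|h| by rewrite mulr_ge0 // ltW.
  have := normr_ge0 h; lra.
have sth : s * (t * `|h|) < m.
  rewrite /s mulrAC ltr_pdivrMr // ltr_pM2l //.
  have : 0 <= t * `|h| by rewrite mulr_ge0 // ltW.
  have := normr_ge0 h; lra.
have m1 : m <= d1 by rewrite ge_min lexx.
have m2 : m <= d2 by rewrite /m !ge_min lexx orbT.
have m3 : m <= `|x| by rewrite /m !ge_min lexx !orbT.
have nk2 : `|s *: h| = s * `|h| by rewrite normrZ gtr0_norm.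
have nk1 : `|t *: (s *: h)| = s * (t * `|h|).
  by rewrite normrZ nk2 gtr0_norm // mulrCA.
have k1d : `|t *: (s *: h)| < d1 by rewrite nk1; apply: lt_le_trans m1.
have k2d : `|s *: h| < d2 by rewrite nk2; apply: lt_le_trans m2.
have := H1 (t *: (s *: h)) k1d w hw.
have := H2 (s *: h) k2d w hw.
have xk0 : x + s *: h != 0.
  apply/eqP => E; have : `|s *: h| = `|x|.
    by rewrite -normrN; congr (`|_|); apply/eqP; rewrite eq_sym -addr_eq0 E.
  by rewrite nk2 => E'; move: sh; rewrite E' => /lt_le_trans/(_ m3); rewrite ltxx.
rewrite -scalerDr (IH jn' (x + s *: h)) // (IH jn' x) //.
rewrite (cons_lin (M := D j.+1 x)); last exact: (twbm j.+1 x jn x0).1.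
rewrite (cons_lin (M := D j.+1 (t *: x))); last exact: (twbm j.+1 _ jn tx0).1.
rewrite (cons_lin (M := D j.+1 (t *: x))); last exact: (twbm j.+1 _ jn tx0).1.
rewrite nk1 nk2 -/A -/B -/T.
set P := D j (x + s *: h) w - D j x w => F2 F1.
have key : `|s * (t * A - T * B)| <= e * (s * (t * `|h|)) + T * (e * (s * `|h|)).
  have -> : s * (t * A - T * B) = - (T * D j (x + s *: h) w - T * D j x w - t * (s * A))
     + T * (P - s * B) by rewrite /P; ring.
  apply: le_trans (ler_normD _ _) _; rewrite normrN normrM ger0_norm //.
  by apply: lerD => //; apply: ler_wpM2l.
move: key; rewrite normrM gtr0_norm // => key.
rewrite -(ler_pM2l sp); apply: le_trans key _.
by rewrite le_eqVlt; apply/orP; left; apply/eqP; ring.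
Qed.

Lemma unit_ne0 (u : X) : `|u| = 1 -> u != 0.
Proof. by move=> hu; apply/eqP => E; move: hu; rewrite E normr0 => /eqP; rewrite eq_sym oner_eq0. Qed.

Lemma normalize (z : X) : z != 0 -> `|(`|z|^-1 *: z)| = 1 /\ z = `|z| *: (`|z|^-1 *: z).
Proof.
move=> z0; have zn : 0 < `|z| by rewrite normr_gt0.
split; first by rewrite normrZ normfV normr_id mulVf ?gt_eqF.
by rewrite scalerA mulfV ?gt_eqF // scale1r.
Qed.

Lemma Bnd j (M : R) : (j <= n)%N ->
  (forall u v, `|u| = 1 -> ball1 v -> `|D j u v| <= M) ->
  forall z v, z != 0 -> ball1 v -> `|D j z v| <= M * `|z| `^ (p - j%:R).
Proof.
move=> jn HS z v z0 hv; have [n1 Ez] := normalize _ z0.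
have zn : 0 < `|z| by rewrite normr_gt0.
rewrite Ez (HOM j jn) // ?unit_ne0 // -Ez normrM ger0_norm ?powR_ge0 // mulrC.
by rewrite ler_wpM2r ?powR_ge0 // HS.
Qed.

Lemma SDown j (M1 : R) : (j < n)%N -> 0 <= M1 ->
  (forall u v, `|u| = 1 -> ball1 v -> `|D j.+1 u v| <= M1) ->
  exists M : R, 0 <= M /\ forall u v, `|u| = 1 -> ball1 v -> `|D j u v| <= M.
Proof.
move=> jn M10 HS.
have q0 : 0 <= p - j.+1%:R.
  rewrite subr_ge0; apply: le_trans (ltW np); by rewrite ler_nat.
have r0 : 0 < p - j%:R.
  rewrite subr_gt0; apply: le_lt_trans np; rewrite ler_nat; exact: ltnW.
have c0 : 0 < 2 `^ (p - j%:R) - 1.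
  rewrite subr_gt0; have := @gt0_ltr_powR R _ r0 1 2.
  by rewrite powR1 => ->//; rewrite ?ltr1n // nnegrE.
exists (M1 * 2 `^ (p - j.+1%:R) / (2 `^ (p - j%:R) - 1)); split.
  by apply: divr_ge0; [apply: mulr_ge0 => //; exact: powR_ge0 | exact: ltW].
move=> u v hu hv; have u0 := unit_ne0 _ hu.
have tw' := tw.
have hB : forall s : R, 0 <= s <= 1 ->
   `|D j.+1 (u + s *: u) (cons_vec u v)| <= M1 * 2 `^ (p - j.+1%:R).
  move=> s /andP[s0 s1].
  have Es : u + s *: u = (1 + s) *: u by rewrite scalerDl scale1r.
  have s1p : 0 < 1 + s by lra.
  rewrite Es; apply: le_trans (Bnd (j.+1) M1 jn HS _ _ _ _) _.
  - by rewrite scaler_eq0 negb_or gt_eqF.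
  - by apply: ball1_cons => //; rewrite hu.
  rewrite ler_wpM2l // normrZ hu mulr1 gtr0_norm //.
  apply: ge0_ler_powR => //; rewrite ?nnegrE ?(ltW s1p) //.
  lra.
have hU : forall s : R, 0 <= s <= 1 -> [set x : X | x != 0] (u + s *: u).
  move=> s /andP[s0 s1] /=.
  have -> : u + s *: u = (1 + s) *: u by rewrite scalerDl scale1r.
  have s1p : 0 < 1 + s by lra.
  by rewrite scaler_eq0 negb_or u0 andbT gt_eqF.
have := MV tw jn hv (fun z z0 => open0 z z0) hU hB.
have -> : u + u = 2 *: u by rewrite -[in LHS](scale1r u) -scalerDl.
rewrite (HOM j (ltnW jn)) ?ltr0n // -{2}(mul1r (D j u v)) -mulrBl normrM gtr0_norm //.
by move=> E; rewrite ler_pdivlMr // mulrC.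
Qed.


Lemma Sall (b : R) (K : R) :
  (forall x y : X, `|x| = 1 -> `|y| = 1 ->
     opnorm (fun v => D n x v - D n y v) <= K * (`|x - y| `^ b)) -> 0 <= b ->
  forall j, (j <= n)%N ->
  exists M : R, 0 <= M /\ forall u v, `|u| = 1 -> ball1 v -> `|D j u v| <= M.
Proof.
move=> hK b0.
have Sn : exists M : R, 0 <= M /\ forall u v, `|u| = 1 -> ball1 v -> `|D n u v| <= M.
  case: (pselect (exists u0 : X, `|u0| = 1)) => [[u0 hu0]|nou]; last first.
    by exists 0; split => // u v hu; case: nou; exists u.
  have u00 := unit_ne0 _ hu0.
  have [C HC] := bm_bnd (twbm n u0 (leqnn n) u00).
  exists (`|C| + `|K| * 2 `^ b); split.
    by rewrite addr_ge0 // mulr_ge0 // powR_ge0.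
  move=> u v hu hv; have u0' := unit_ne0 _ hu.
  have [C' HC'] := bm_bnd (twbm n u (leqnn n) u0').
  have -> : D n u v = D n u0 v + (D n u v - D n u0 v) by rewrite addrC subrK.
  apply: le_trans (ler_normD _ _) _; apply: lerD.
    by apply: le_trans (HC v hv) _; exact: ler_norm.
  have H1 : `|D n u v - D n u0 v| <= opnorm (fun w => D n u w - D n u0 w).
    apply: (opnorm_ge (C := C' + C) (M := fun w => D n u w - D n u0 w)) => // w hw.
    by apply: le_trans (ler_normB _ _) _; rewrite lerD ?HC ?HC'.
  apply: le_trans H1 _; apply: le_trans (hK u u0 hu hu0) _.
  apply: le_trans (_ : `|K| * `|u - u0| `^ b <= _).
    by rewrite ler_wpM2r ?powR_ge0 // ler_norm.
  rewrite ler_wpM2l //; apply: ge0_ler_powR; rewrite ?nnegrE //.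
  by apply: le_trans (ler_normB _ _) _; rewrite hu hu0.
suff H : forall k j, (j + k = n)%N ->
  exists M : R, 0 <= M /\ forall u v, `|u| = 1 -> ball1 v -> `|D j u v| <= M.
  by move=> j jn; apply: (H (n - j)%N); rewrite subnKC.
elim=> [|k IH] j E; first by move: E; rewrite addn0 => ->.
have E' : (j.+1 + k)%N = n by rewrite addSnnS.
have [M1 [M10 HM1]] := IH j.+1 E'.
apply: (SDown j M1) => //; rewrite -E; lia.
Qed.

End Main.

Definition ext {R : realType} {X : normedModType R}
  (D : forall j : nat, X -> ('I_j -> X) -> R) (j : nat) (x : X) : ('I_j -> X) -> R :=
  if x == 0 then (fun _ => 0) else D j x.

Section Main2.
Context {R : realType} {X : normedModType R}.
Context (p : R) (n : nat) (f : X -> R) (D : forall j : nat, X -> ('I_j -> X) -> R).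
Context (np : n%:R < p) (hom : p_homogeneous p f)
  (tw : Cn_tower [set x : X | x != 0] f n D).

Lemma BD j (M : R) : (j <= n)%N -> 0 <= M ->
  (forall u v, `|u| = 1 -> ball1 v -> `|D j u v| <= M) ->
  forall z v, ball1 v -> `|ext D j z v| <= M * `|z| `^ (p - j%:R).
Proof.
move=> jn M0 HS z v hv; rewrite /ext; case: eqP => [_|/eqP z0].
  by rewrite normr0 mulr_ge0 // powR_ge0.
exact: (Bnd p n f D hom tw j M jn HS z v z0 hv).
Qed.

Lemma Hol1 (b K Mn : R) : 0 < b -> b <= 1 -> 0 <= Mn ->
  (forall x y : X, `|x| = 1 -> `|y| = 1 ->
     opnorm (fun v => D n x v - D n y v) <= K * (`|x - y| `^ b)) ->
  (forall u v, `|u| = 1 -> ball1 v -> `|D n u v| <= Mn) ->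
  exists C : R, 0 < C /\ forall (x y : X) v, `|y| <= `|x| -> ball1 v ->
    `|ext D n x v - ext D n y v| <= C * `|x| `^ (p - n%:R - b) * `|x - y| `^ b.
Proof.
move=> b0 b1 Mn0 hK HMn.
set a := p - n%:R.
have a0 : 0 < a by rewrite subr_gt0.
have [k hk] : exists k : nat, a <= k%:R.
  by exists (Num.Def.archi_bound a); apply: ltW; apply: archi_boundP; apply: ltW.
have p2b : 0 <= 2 `^ b by apply: powR_ge0.
pose C := 2 * Mn * 2 `^ b + `|K| * 2 `^ b + k%:R * Mn + 1.
have C1 : 0 <= 2 * Mn * 2 `^ b by rewrite !mulr_ge0.
have C2 : 0 <= `|K| * 2 `^ b by rewrite !mulr_ge0.
have C3 : 0 <= k%:R * Mn by rewrite !mulr_ge0.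
exists C; split; first by rewrite /C; lra.
move=> x y v hxy hv.
have BDn := BD n Mn (leqnn n) Mn0 HMn.
set m := `|x|.
have m0 : 0 <= m by apply: normr_ge0.
have dxy0 : 0 <= `|x - y| by apply: normr_ge0.
have pab : 0 <= m `^ (a - b) by apply: powR_ge0.
have pdb : 0 <= `|x - y| `^ b by apply: powR_ge0.
have mab : m `^ a = m `^ (a - b) * m `^ b.
  by rewrite -powRD ?subrK // gt_eqF.
case: (lerP m (2 * `|x - y|)) => [hA | hB].
  have e1 : `|ext D n x v - ext D n y v| <= 2 * Mn * m `^ a.
    apply: le_trans (ler_normB _ _) _.
    have := BDn x v hv; have := BDn y v hv.
    have : `|y| `^ a <= m `^ a.
      by apply: ge0_ler_powR; rewrite ?nnegrE ?(ltW a0) // normr_ge0.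
    rewrite -/a -/m => h1 h2 h3.
    have : Mn * `|y| `^ a <= Mn * m `^ a by apply: ler_wpM2l.
    lra.
  have e3 : m `^ b <= 2 `^ b * `|x - y| `^ b.
    rewrite -powRM //; apply: ge0_ler_powR => //; rewrite ?nnegrE ?(ltW b0) // mulr_ge0.
  apply: le_trans e1 _; rewrite mab.
  apply: le_trans (_ : 2 * Mn * (m `^ (a - b) * (2 `^ b * `|x - y| `^ b)) <= _).
    by apply: ler_wpM2l; [rewrite mulr_ge0 | apply: ler_wpM2l].
  have -> : 2 * Mn * (m `^ (a - b) * (2 `^ b * `|x - y| `^ b)) =
    (2 * Mn * 2 `^ b) * (m `^ (a - b) * `|x - y| `^ b) by ring.
  rewrite -[in X in _ <= X]mulrA; apply: ler_wpM2r; first by rewrite mulr_ge0.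
  rewrite /C; lra.
have mp : 0 < m by apply: le_lt_trans hB; rewrite mulr_ge0.
have x0 : x != 0 by rewrite -normr_gt0.
have hy : m <= `|y| + `|x - y|.
  by rewrite /m -{1}(subrK y x) addrC; apply: ler_normD.
have yp : 0 < `|y| by lra.
have y0 : y != 0 by rewrite -normr_gt0.
set xh := m^-1 *: x; set y' := m^-1 *: y.
have [hxh Ex] := normalize _ x0; rewrite -/m -/xh in hxh Ex.
have Ey : y = m *: y' by rewrite /y' scalerA mulfV ?gt_eqF // scale1r.
have ny' : `|y'| = `|y| / m by rewrite /y' normrZ normfV gtr0_norm // mulrC.
set s := `|y'|.
have sp : 0 < s by rewrite /s ny' divr_gt0.
have s1 : s <= 1 by rewrite /s ny' ler_pdivrMr // mul1r.
have y'0 : y' != 0 by rewrite -normr_gt0.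
have [hyh Ey'] := normalize _ y'0; rewrite -/s in hyh Ey'.
set yh := s^-1 *: y' in hyh Ey'.
have xh0 : xh != 0 by apply: unit_ne0.
have yh0 : yh != 0 by apply: unit_ne0.
have HOMn := HOM p n f D hom tw n (leqnn n).
have Dx : ext D n x v = m `^ a * D n xh v.
  by rewrite /ext (negbTE x0) {1}Ex HOMn.
have Dy : ext D n y v = m `^ a * (s `^ a * D n yh v).
  by rewrite /ext (negbTE y0) Ey HOMn // -?normr_gt0 // Ey' HOMn.
set tau := `|x - y| / m.
have tau0 : 0 <= tau by rewrite divr_ge0.
have tau1 : tau <= 1 by rewrite /tau ler_pdivrMr //; lra.
have t1 : `|xh - y'| = tau.
  by rewrite /xh /y' -scalerBr normrZ normfV gtr0_norm // mulrC.
have t2 : 1 - s <= tau.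
  rewrite /s ny' /tau ler_pdivlMr // mulrBl mul1r divfK ?gt_eqF //; lra.
have t3 : `|y' - yh| = 1 - s.
  have -> : y' - yh = (1 - s^-1) *: y' by rewrite /yh scalerBl scale1r.
  rewrite normrZ -/s -[X in _ * X = _](gtr0_norm sp) -normrM mulrBl mul1r mulVf ?gt_eqF //.
  by rewrite distrC ger0_norm // subr_ge0.
have t4 : `|xh - yh| <= 2 * tau.
  have -> : xh - yh = (xh - y') + (y' - yh) by rewrite addrA subrK.
  apply: le_trans (ler_normD _ _) _; rewrite t1 t3; lra.
have Hol : `|D n xh v - D n yh v| <= `|K| * 2 `^ b * tau `^ b.
  have [C1' HC1] := bm_bnd (twbm n f D tw n xh (leqnn n) xh0).
  have [C2' HC2] := bm_bnd (twbm n f D tw n yh (leqnn n) yh0).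
  have H1 : `|D n xh v - D n yh v| <= opnorm (fun w => D n xh w - D n yh w).
    apply: (opnorm_ge (C := C1' + C2') (M := fun w => D n xh w - D n yh w)) => // w hw.
    by apply: le_trans (ler_normB _ _) _; rewrite lerD ?HC1 ?HC2.
  apply: le_trans H1 _; apply: le_trans (hK xh yh hxh hyh) _.
  apply: le_trans (_ : `|K| * `|xh - yh| `^ b <= _).
    by rewrite ler_wpM2r ?powR_ge0 // ler_norm.
  rewrite -mulrA ler_wpM2l // -powRM //.
  by apply: ge0_ler_powR => //; rewrite ?nnegrE ?(ltW b0) // mulr_ge0.
have sa1 : s `^ a <= 1.
  by rewrite -(powRr0 s); apply: ger_powR; rewrite ?sp ?s1 // ltW.
have sak : s ^+ k <= s `^ a.
  rewrite -powR_mulrn; last exact: (ltW sp).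
  by apply: ger_powR => //; rewrite sp s1.
have ks : 1 - s ^+ k <= k%:R * (1 - s) by apply: one_sub_exp; rewrite (ltW sp) s1.
have Rad : `|(1 - s `^ a) * D n yh v| <= k%:R * Mn * tau `^ b.
  rewrite normrM ger0_norm ?subr_ge0 //.
  apply: le_trans (_ : (1 - s `^ a) * Mn <= _).
    by apply: ler_wpM2l; [rewrite subr_ge0 | apply: HMn].
  have tb : tau <= tau `^ b by apply: tau_le; rewrite ?tau0 ?tau1 ?b0 ?b1.
  have : (1 - s `^ a) <= k%:R * tau by apply: le_trans (_ : k%:R * (1 - s) <= _); [lra | apply: ler_wpM2l].
  move=> h; apply: le_trans (_ : k%:R * tau * Mn <= _); first by apply: ler_wpM2r.
  rewrite mulrAC; apply: ler_wpM2l; first by rewrite mulr_ge0.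
  done.
have key : ext D n x v - ext D n y v =
  m `^ a * ((D n xh v - D n yh v) + (1 - s `^ a) * D n yh v) by rewrite Dx Dy; ring.
rewrite key normrM ger0_norm ?powR_ge0 //.
apply: le_trans (_ : m `^ a * ((`|K| * 2 `^ b + k%:R * Mn) * tau `^ b) <= _).
  apply: ler_wpM2l; first exact: powR_ge0.
  apply: le_trans (ler_normD _ _) _; lra.
have tauE : m `^ a * tau `^ b = m `^ (a - b) * `|x - y| `^ b.
  rewrite /tau powRM // ?invr_ge0 // mab.
  have : m `^ b * m^-1 `^ b = 1.
    by rewrite -powRM ?invr_ge0 // mulfV ?gt_eqF // powR1.
  move=> h; rewrite -[RHS]mulr1 -h; ring.
have -> : m `^ a * ((`|K| * 2 `^ b + k%:R * Mn) * tau `^ b) =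
   (`|K| * 2 `^ b + k%:R * Mn) * (m `^ a * tau `^ b) by ring.
rewrite tauE -mulrA; apply: ler_wpM2r; first by rewrite mulr_ge0.
rewrite /C; lra.
Qed.

End Main2.

Theorem lemma2p2 (R : realType) (X : completeNormedModType R) (r p : R)
  (n : nat) (f : X -> R) (D : forall j : nat, X -> ('I_j -> X) -> R) :
  1 < r -> r <= p ->
  n%:R < r -> r <= n.+1%:R ->
  p_homogeneous p f ->
  Cn_tower [set x : X | x != 0] f n D ->
  (exists K : R, forall x y : X, `|x| = 1 -> `|y| = 1 ->
     opnorm (fun v => D n x v - D n y v) <= K * (`|x - y| `^ (r - n%:R))) ->
  exists D' : forall j : nat, X -> ('I_j -> X) -> R,
    [/\ Cn_tower setT f n D',
        (forall j x, (j <= n)%N -> x != 0 -> D' j x = D j x),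
        (forall j, (1 <= j <= n)%N -> D' j 0 = fun _ => 0) &
        exists C : nat -> R,
          (forall j, (1 <= j <= n)%N -> 0 < C j) /\
          (forall x y : X,
             opnorm (fun v => D' n x v - D' n y v)
               <= C n * (Num.max `|x| `|y|) `^ (p - r) * `|x - y| `^ (r - n%:R)) /\
          (forall j, (1 <= j <= n.-1)%N -> forall x y : X,
             opnorm (fun v => D' j x v - D' j y v)
               <= C j * (Num.max `|x| `|y|) `^ (p - j.+1%:R) * `|x - y|)].
Proof.
move=> r1 rp nr rn hom tw [K hK].
have np : n%:R < p by apply: lt_le_trans rp.
have b0 : 0 < r - n%:R by rewrite subr_gt0.
have b1 : r - n%:R <= 1 by move: rn; rewrite -natr1; lra.
have p0 : 0 < p by lra.
have f0 : f 0 = 0.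
  have := hom 0 0; rewrite scale0r normr0 powR0 ?gt_eqF // mul0r //.
have SA := Sall p n f D np hom tw (r - n%:R) K hK (ltW b0).
have [Mf HMf] : {Mf : nat -> R & forall j, (j <= n)%N -> 0 <= Mf j /\
    forall u v, `|u| = 1 -> ball1 v -> `|D j u v| <= Mf j}.
  apply: (@choice _ _ (fun j M => (j <= n)%N -> 0 <= M /\
    forall u v, `|u| = 1 -> ball1 v -> `|D j u v| <= M)) => j.
  case: (leqP j n) => jn; last by exists 0.
  by have [M HM] := SA j jn; exists M.
have BDj : forall j z v, (j <= n)%N -> ball1 v ->
    `|ext D j z v| <= Mf j * `|z| `^ (p - j%:R).
  move=> j z v jn hv.
  exact: (BD p n f D hom tw j (Mf j) jn (HMf j jn).1 (HMf j jn).2 z v hv).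
have E0 : forall k (w : 'I_k -> X), ext D k 0 w = 0 by move=> k w; rewrite /ext eqxx.
have towE : Cn_tower setT f n (ext D).
  split.
  - move=> x _ v; rewrite /ext; case: eqP => [->|/eqP x0] //.
    by case: tw => H0 _ _ _; rewrite H0.
  - move=> j x jn _; rewrite /ext; case: eqP => [_|/eqP x0].
      split; first by move=> v i a u w; rewrite mulr0 addr0.
      by exists 0 => v; rewrite normr0 mul0r.
    exact: (twbm n f D tw j x jn x0).
  - move=> j x jn _ eps ep; case: (eqVneq x 0) => [->|x0].
      have q0 : 0 < p - j%:R - 1.
        have : j.+1%:R <= n%:R :> R by rewrite ler_nat.
        rewrite -natr1; lra.
      have [M0 _] := HMf j (ltnW jn).
      have [d dp Hd] := small M0 q0 ep.
      exists d => // h hd; apply: opnorm_le => v hv.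
      rewrite add0r !E0 !subr0.
      apply: le_trans (BDj j h v (ltnW jn) hv) _.
      have -> : p - j%:R = (p - j%:R - 1) + 1 by ring.
      rewrite powRD; last by rewrite subrK gt_eqF // subr_gt0; apply: le_lt_trans np; rewrite ler_nat ltnW.
      rewrite powRr1 ?normr_ge0 // mulrA ler_wpM2r //.
      exact: Hd (normr_ge0 h) hd.
    case: tw => _ _ fr _.
    have [d dp Hd] := fr j x jn x0 eps ep.
    have [d0 d0p Hd0] := open0 x x0.
    exists (Num.min d d0); first by rewrite lt_min dp d0p.
    move=> h; rewrite lt_min => /andP[hd hd0].
    have xh0 : x + h != 0 by apply: Hd0.
    rewrite /ext (negbTE x0) (negbTE xh0).
    exact: Hd.
  - move=> x _ eps ep; case: (eqVneq x 0) => [->|x0].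
      have [M0 _] := HMf n (leqnn n).
      have q0 : 0 < p - n%:R by rewrite subr_gt0.
      have [d dp Hd] := small M0 q0 ep.
      exists d => // y _; rewrite subr0 => hy; apply: opnorm_le => v hv.
      rewrite E0 subr0; apply: le_trans (BDj n y v (leqnn n) hv) _.
      exact: Hd (normr_ge0 y) hy.
    case: tw => _ _ _ ct.
    have [d dp Hd] := ct x x0 eps ep.
    have [d0 d0p Hd0] := open0 x x0.
    exists (Num.min d d0); first by rewrite lt_min dp d0p.
    move=> y _; rewrite lt_min => /andP[hd hd0].
    have y0 : y != 0.
      by have := Hd0 (y - x) hd0; rewrite addrC subrK.
    rewrite /ext (negbTE x0) (negbTE y0).
    exact: Hd.
have [M0n _] := HMf n (leqnn n).
have [Cn [Cn0 HCn]] := Hol1 p n f D np hom tw (r - n%:R) K (Mf n) b0 b1 M0n hK (HMf n (leqnn n)).2.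
exists (ext D); split => //.
- by move=> j x jn x0; rewrite /ext (negbTE x0).
- by move=> j _; rewrite /ext eqxx.
exists (fun j => if j == n then Cn else Mf j.+1 + 1); split; [|split].
- move=> j /andP[j1 jn]; case: eqP => // /eqP jn'.
  have jn2 : (j.+1 <= n)%N by rewrite ltn_neqAle jn' jn.
  have [M1 _] := HMf j.+1 jn2; lra.
- move=> x y; rewrite eqxx; apply: opnorm_le => v hv.
  have -> : p - r = p - n%:R - (r - n%:R) by ring.
  case: (lerP `|y| `|x|) => h.
    rewrite /Order.max.
    by apply: HCn.
  rewrite /Order.max.
  rewrite distrC [`|x - y|]distrC.
  by apply: HCn => //; apply: ltW.
move=> j /andP[j1 jn] x y.
have jn' : (j < n)%N by lia.
rewrite (ltn_eqF jn'); apply: opnorm_le => v hv.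
set mx := Num.max `|x| `|y|.
have [M1 HM1] := HMf j.+1 jn'.
have q0 : 0 <= p - j.+1%:R.
  rewrite subr_ge0; apply: le_trans (ltW np); by rewrite ler_nat.
have hB : forall s : R, 0 <= s <= 1 ->
    `|ext D j.+1 (y + s *: (x - y)) (cons_vec (x - y) v)| <= Mf j.+1 * mx `^ (p - j.+1%:R) * `|x - y|.
  move=> s /andP[s0 s1].
  set z := y + s *: (x - y).
  have bmz : bounded_multilinear (ext D j.+1 z).
    by case: towE => _ H _ _; apply: H.
  have HB' : forall u, ball1 u -> `|ext D j.+1 z u| <= Mf j.+1 * `|z| `^ (p - j.+1%:R).
    by move=> u hu; apply: BDj.
  apply: le_trans (@cons_bound R X j (ext D j.+1 z) _ (x - y) v bmz.1 HB' hv) _.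
  apply: ler_wpM2r => //; apply: ler_wpM2l => //.
  have zm : `|z| <= mx.
    have -> : z = (1 - s) *: y + s *: x.
      by rewrite /z scalerBr scalerBl scale1r addrCA addrC.
    apply: le_trans (ler_normD _ _) _.
    rewrite !normrZ ger0_norm ?subr_ge0 // ger0_norm //.
    have ny := normr_ge0 y; have nx := normr_ge0 x.
    rewrite /mx /Order.max; case: (lerP `|y| `|x|) => hm /=; nra.
  by apply: ge0_ler_powR; rewrite ?nnegrE ?normr_ge0 // (le_trans (normr_ge0 _) zm).
have := MV towE jn' hv (fun z _ => ex_intro2 _ _ 1 ltr01 (fun h _ => I)) (fun s _ => I) hB.
rewrite [y + (x - y)]addrC subrK => H; apply: le_trans H _.
apply: ler_wpM2r => //; apply: ler_wpM2r; first exact: powR_ge0.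
by rewrite lerDl.
Qed.
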